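(* Let $n_1,n_2,n^*_1,n^*_2$ be integers with $1\le n_1\le n^*_1\le n^*_2\le n_2$, $n=n_1+n_2$, $n^*=n^*_1+n^*_2$. Let $\psi_1$ be an Archimedean generator with $\phi_1=\psi_1^{-1}$, and $\lambda_1\ge\lambda_2>0$. Let $X_{n:n}(n_1,n_2)$ denote the maximum of $n$ dependent nonnegative random variables sharing an Archimedean copula with generator $\psi_1$, of which $n_1$ have distribution function $x\mapsto F_1(\lambda_1x)$ and $n_2$ have distribution function $x\mapsto F_2(\lambda_2x)$; and let $X_{n^*:n^*}(n^*_1,n^*_2)$ denote the maximum of $n^*$ dependent nonnegative random variables sharing an Archimedean copula with the same generator $\psi_1$, of which $n^*_1$ have distribution function $x\mapsto F_1(\lambda_1x)$ and $n^*_2$ have distribution function $x\mapsto F_2(\lambda_2x)$. Suppose $F_1(x)\ge F_2(x)$ for all $x$. Then $$(n_1,n_2)\succeq_{w}(n^*_1,n^*_2)\ \Longrightarrow\ X_{n^*:n^*}(n^*_1,n^*_2)\le_{st}X_{n:n}(n_1,n_2).$$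
   Context: Archimedean copula: a generator is a continuous nonincreasing $\psi:[0,\infty)\to[0,1]$ with $\psi(0)=1$, $\psi(\infty)=0$, which is $m$-monotone so that it generates an $m$-dimensional copula; $\phi=\psi^{-1}$. Random variables $Z_1,\dots,Z_m$ with marginal distribution functions $G_i$ share an Archimedean copula with generator $\psi$ if $P(Z_1\le z_1,\dots,Z_m\le z_m)=\psi\big(\sum_i\phi(G_i(z_i))\big)$. $F_1,F_2$ are baseline distribution functions of nonnegative random variables. For $\boldsymbol a,\boldsymbol b\in\mathbb R^k$ with increasingly ordered coordinates $a_{(1)}\le\dots\le a_{(k)}$: $\boldsymbol a\succeq_{w}\boldsymbol b$ means $\sum_{i=l}^k a_{(i)}\ge\sum_{i=l}^k b_{(i)}$ for all $l=1,\dots,k$. $U\le_{st}V$ means $P(U>x)\le P(V>x)$ for all $x$. *)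

(* Defs.v *)
From HB Require Import structures.
From mathcomp Require Import all_boot all_order all_algebra.
From mathcomp Require Import all_classical all_reals all_analysis.
Set Implicit Arguments. Unset Strict Implicit. Unset Printing Implicit Defensive.
Import Order.TTheory GRing.Theory Num.Theory.
Import numFieldNormedType.Exports.
Local Open Scope classical_set_scope.
Local Open Scope ring_scope.

Section Defs.
Variable R : realType.

(* m-monotonicity on [0,oo) (McNeil & Neslehova 2009): psi is (m-2) times
   differentiable on (0,oo), (-1)^k psi^(k) >= 0 for k = 0..m-2 on (0,oo),
   and (-1)^(m-2) psi^(m-2) is nonincreasing and convex on (0,oo)
   (for m = 1 only nonincreasingness is required). *)
Definition m_monotone (m : nat) (psi : R -> R) : Prop :=
  [/\ forall k, (k < m - 2)%N -> forall x, 0 < x -> derivable (derive1n k psi) x 1,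
      forall k, (k <= m - 2)%N -> forall x, 0 < x -> 0 <= (-1) ^+ k * derive1n k psi x,
      forall x y, 0 < x -> x <= y ->
        (-1) ^+ (m - 2) * derive1n (m - 2) psi y <= (-1) ^+ (m - 2) * derive1n (m - 2) psi x
    & (2 <= m)%N -> forall x y t, 0 < x -> 0 < y -> 0 <= t <= 1 ->
        (-1) ^+ (m - 2) * derive1n (m - 2) psi (t * x + (1 - t) * y)
        <= t * ((-1) ^+ (m - 2) * derive1n (m - 2) psi x)
           + (1 - t) * ((-1) ^+ (m - 2) * derive1n (m - 2) psi y)].

(* Archimedean generator of an m-dimensional copula (only its values on
   [0,oo) matter). *)
Definition arch_generator (m : nat) (psi : R -> R) : Prop :=
  [/\ {within [set x | 0 <= x], continuous psi}
      /\ (forall x y, 0 <= x -> x <= y -> psi y <= psi x),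
      forall x, 0 <= x -> 0 <= psi x <= 1,
      psi 0 = 1,
      psi x @[x --> +oo] --> (0 : R)
    & m_monotone m psi].

Definition psi_ext (psi : R -> R) (t : \bar R) : R :=
  match t with EFin r => psi r | _ => 0 end.

(* phi = psi^{-1}, the (generalized) inverse: phi u = inf {t >= 0 | psi t <= u},
   with value +oo when the set is empty (e.g. phi 0 = +oo for strict generators). *)
Definition phi_inv (psi : R -> R) (u : R) : \bar R :=
  ereal_inf [set (t%:E)%E | t in [set t | 0 <= t /\ psi t <= u]].

Definition nonneg_cdf (F : R -> R) : Prop :=
  [/\ forall x y, x <= y -> F x <= F y,
      forall x, F z @[z --> x^'+] --> F x,
      forall x, x < 0 -> F x = 0
    & F z @[z --> +oo] --> (1 : R)].

Definition archimedean_rv d (T : measurableType d) (P : probability T R)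
  (m : nat) (Z : 'I_m -> T -> R) (G : 'I_m -> R -> R) (psi : R -> R) : Prop :=
  [/\ forall i, measurable_fun setT (Z i),
      forall i x, P [set w | Z i w <= x] = (G i x)%:E
    & forall z : 'I_m -> R,
        P [set w | forall i, Z i w <= z i]
        = (psi_ext psi (\sum_(i < m) phi_inv psi (G i (z i)))%E)%:E].

Definition vmax d (T : measurableType d) (m : nat) (Z : 'I_m -> T -> R) (w : T)
  : \bar R := (\big[maxe/-oo]_(i < m) (Z i w)%:E)%E.

Definition two_sample_df (n1 n2 : nat) (F1 F2 : R -> R) (l1 l2 : R)
  : 'I_(n1 + n2) -> R -> R :=
  fun i x => if (i < n1)%N then F1 (l1 * x) else F2 (l2 * x).

End Defs.

(* weak (super)majorization a >=_w b for vectors of naturals: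
   with increasing rearrangements, sum_{i=l}^k a_(i) >= sum_{i=l}^k b_(i) for all l *)
Definition wmaj (a b : seq nat) : Prop :=
  size a = size b /\
  forall l : nat, (\sum_(x <- drop l (sort leq b)) x <= \sum_(x <- drop l (sort leq a)) x)%N.

Arguments two_sample_df {R} n1 n2 F1 F2 l1 l2 _ _.

(* Main.v *)
Require Import Defs.
From HB Require Import structures.
From mathcomp Require Import all_boot all_order all_algebra.
From mathcomp Require Import all_classical all_reals all_analysis.
From mathcomp Require Import ring.
Import Order.TTheory GRing.Theory Num.Theory.
Local Open Scope classical_set_scope.
Local Open Scope ring_scope.

Lemma vmax_setC (R : realType) d (T : measurableType d) (m : nat)
  (Z : 'I_m -> T -> R) (x : R) :
  [set w | (x%:E < vmax Z w)%E] = ~` [set w | forall i, Z i w <= x].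
Proof.
apply/funext => w; apply/propext; rewrite /vmax /=; split.
- rewrite ltNge => /negP H Hall; apply: H; apply/bigmax_leP; split.
    exact: leNye.
  by move=> i _; rewrite lee_fin; exact: Hall.
- move=> H; rewrite ltNge; apply/negP => /bigmax_leP [_ Hi]; apply: H => i.
  by rewrite -lee_fin; exact: Hi.
Qed.

Lemma allle_meas (R : realType) d (T : measurableType d) (m : nat)
  (Z : 'I_m -> T -> R) (x : R) :
  (forall i, measurable_fun setT (Z i)) ->
  measurable [set w | forall i, Z i w <= x].
Proof.
move=> mZ.
have -> : [set w | forall i, Z i w <= x] =
  \bigcap_(i in [set: 'I_m]) (setT `&` Z i @^-1` `]-oo, x]).
  apply/funext => w; apply/propext; split.
    move=> H i _; split => //=; rewrite in_itv /=; exact: H.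
  by move=> H i; have [_ /=] := H i I; rewrite in_itv.
apply: fin_bigcap_measurable; first exact: finite_finset.
by move=> i _; apply: mZ => //; exact: measurable_itv.
Qed.

Lemma phi_inv_ge0 (R : realType) (psi : R -> R) u : (0 <= phi_inv psi u)%E.
Proof.
apply: le_ereal_inf_tmp => _ [t [t0 _] <-]; by rewrite lee_fin.
Qed.

Lemma phi_inv_anti (R : realType) (psi : R -> R) u v : u <= v ->
  (phi_inv psi v <= phi_inv psi u)%E.
Proof.
move=> uv; apply: ereal_inf_le_tmp => _ [t [t0 ht] <-]; exists t => //.
split => //; exact: le_trans ht uv.
Qed.

Lemma psi_ext_anti (R : realType) m (psi : R -> R) (a b : \bar R) :
  arch_generator m psi -> (0 <= a)%E -> (a <= b)%E -> psi_ext psi b <= psi_ext psi a.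
Proof.
case=> [[_ mon] rng _ _ _].
case: a => [a| |] //; case: b => [b| |] //=.
- rewrite !lee_fin => a0 ab; apply: mon => //.
- by rewrite lee_fin => a0 _; have /andP[] := rng a a0.
Qed.

Lemma sum_two (R : realType) (n1 n2 : nat) (F1 F2 : R -> R) (l1 l2 : R) psi x :
  (\sum_(i < n1 + n2) phi_inv psi (two_sample_df n1 n2 F1 F2 l1 l2 i x))%E =
  (phi_inv psi (F1 (l1 * x)%R) *+ n1 + phi_inv psi (F2 (l2 * x)%R) *+ n2)%E.
Proof.
rewrite big_split_ord /=; congr (_ + _)%E.
- rewrite (eq_bigr (fun _ => phi_inv psi (F1 (l1 * x)%R))); last first.
    by move=> i _; rewrite /two_sample_df /= ltn_ord.
  by rewrite sumr_const card_ord.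
- rewrite (eq_bigr (fun _ => phi_inv psi (F2 (l2 * x)%R))); last first.
    by move=> i _; rewrite /two_sample_df /= ltnNge leq_addr.
  by rewrite sumr_const card_ord.
Qed.

Lemma natmul_ge0 (R : realType) (a : \bar R) n : (0 <= a)%E -> (0 <= a *+ n)%E.
Proof. by move=> a0; rewrite -mule_natl mule_ge0 // lee_fin. Qed.

Lemma comb (R : realType) (a b : \bar R) n1 n2 ns1 ns2 :
  (0 <= a)%E -> (a <= b)%E -> (1 <= n2)%N -> (ns2 <= n2)%N ->
  (ns1 + ns2 <= n1 + n2)%N ->
  (a *+ ns1 + b *+ ns2 <= a *+ n1 + b *+ n2)%E.
Proof.
move=> a0 ab n2p h2 hs.
case: b ab => [r| |] ab.
- case: a a0 ab => [s| |] // a0 ab.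
  rewrite -!EFin_natmul -!EFinD lee_fin.
  rewrite lee_fin in a0; rewrite lee_fin in ab.
  rewrite -[s *+ ns1]mulr_natl -[s *+ n1]mulr_natl -[r *+ ns2]mulr_natl -[r *+ n2]mulr_natl.
  have h2' : (ns2%:R <= n2%:R :> R) by rewrite ler_nat.
  have hs' : (ns1%:R + ns2%:R <= n1%:R + n2%:R :> R) by rewrite -!natrD ler_nat.
  rewrite -subr_ge0.
  have -> : n1%:R * s + n2%:R * r - (ns1%:R * s + ns2%:R * r) =
    (n1%:R + n2%:R - (ns1%:R + ns2%:R)) * s + (n2%:R - ns2%:R) * (r - s) :> R.
    by ring.
  by rewrite addr_ge0 // mulr_ge0 // subr_ge0.
- have -> : ((+oo : \bar R) *+ n2 = +oo)%E.
    rewrite -mule_natr gt0_mulye // lte_fin ltr0n; exact: n2p.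
  rewrite addey ?leey //.
  by rewrite gt_eqF // (lt_le_trans _ (@natmul_ge0 _ _ n1 a0)) // ltNyr.
- by move: (le_trans a0 ab).
Qed.

Theorem theorem3p2 (R : realType) (n1 n2 ns1 ns2 : nat)
  (psi : R -> R) (l1 l2 : R) (F1 F2 : R -> R)
  (d : measure_display) (T : measurableType d) (P : probability T R)
  (X : 'I_(n1 + n2) -> T -> R)
  (ds : measure_display) (Ts : measurableType ds) (Ps : probability Ts R)
  (Xs : 'I_(ns1 + ns2) -> Ts -> R) :
  (1 <= n1)%N -> (n1 <= ns1)%N -> (ns1 <= ns2)%N -> (ns2 <= n2)%N ->
  arch_generator (n1 + n2) psi -> arch_generator (ns1 + ns2) psi ->
  0 < l2 -> l2 <= l1 ->
  nonneg_cdf F1 -> nonneg_cdf F2 ->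
  (forall x, F2 x <= F1 x) ->
  archimedean_rv P X (two_sample_df n1 n2 F1 F2 l1 l2) psi ->
  archimedean_rv Ps Xs (two_sample_df ns1 ns2 F1 F2 l1 l2) psi ->
  wmaj [:: n1; n2] [:: ns1; ns2] ->
  forall x : R,
    (Ps [set w | x%:E < vmax Xs w] <= P [set w | x%:E < vmax X w])%E.
Proof.
move=> h1 h2 h3 h4 gen gens l2p l21 cF1 cF2 F21 [mX _ jX] [mXs _ jXs] [_ wm] x.
have hs : (ns1 + ns2 <= n1 + n2)%N.
  move: (wm 0%N); rewrite !drop0.
  rewrite (@sorted_sort _ leq leq_trans [:: ns1; ns2]) /=; last by rewrite andbT.
  rewrite (@sorted_sort _ leq leq_trans [:: n1; n2]) /=; last first.
    by rewrite andbT; apply: leq_trans h2 (leq_trans h3 h4).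
  by rewrite !big_cons !big_nil !addn0.
rewrite !vmax_setC !probability_setC; try by apply: allle_meas.
rewrite (jX (fun _ => x)) (jXs (fun _ => x)) !sum_two.
rewrite -!EFinB lee_fin; apply: lerB => //; apply: (@psi_ext_anti _ _ _ _ _ gens).
- by rewrite adde_ge0 // natmul_ge0 // phi_inv_ge0.
- apply: comb => //; first exact: phi_inv_ge0.
  + apply: phi_inv_anti.
    have [x0|x0] := leP 0%R x.
      apply: le_trans (F21 _); case: cF2 => mon _ _ _; apply: mon.
      exact: ler_wpM2r.
    case: cF2 => _ _ z0 _; rewrite z0; last by rewrite pmulr_rlt0.
    case: cF1 => _ _ z1 _; rewrite z1 //.
    by rewrite pmulr_rlt0 // (lt_le_trans l2p l21).
  + exact: leq_trans h1 (leq_trans h2 (leq_trans h3 h4)).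
Qed.
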